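(* Let $K$ be a field, $E$ a directed graph, and $L=L_K(E)$. Let $c$ and $d$ be distinct cycles in $E$ (that is, $c$ and $d$ have distinct sets of edges), neither of which has an exit, and let $f(x),g(x)\in K[x]$ be polynomials with nonzero constant terms. Then $\langle f(c)\rangle\langle g(d)\rangle=0$.
   Context: A directed graph $E=(E^0,E^1,r,s)$ has vertex set $E^0\neq\emptyset$, edge set $E^1$, and range and source maps $r,s:E^1\to E^0$ (no cardinality restrictions). A path is a finite sequence $e_1\cdots e_n$ of edges with $r(e_i)=s(e_{i+1})$. A cycle is a path $e_1\cdots e_n$ with $r(e_n)=s(e_1)$ and $s(e_i)\neq s(e_j)$ for $i\neq j$. An exit of a path $e_1\cdots e_n$ is an edge $f\notin\{e_1,\dots,e_n\}$ with $s(f)=s(e_i)$ for some $i$. The Leavitt path algebra $L_K(E)$ is the $K$-algebra generated by $\{v:v\in E^0\}\cup\{e,e^*:e\in E^1\}$ subject to: $vw=\delta_{v,w}v$; $s(e)e=er(e)=e$; $r(e)e^*=e^*s(e)=e^*$; $e^*f=\delta_{e,f}r(e)$ for $e,f\in E^1$; and $v=\sum_{e\in s^{-1}(v)}ee^*$ whenever $s^{-1}(v)$ is finite and nonempty. For a path $\mu=e_1\cdots e_n$, $\mu$ is also viewed as the product $e_1\cdots e_n\in L_K(E)$. For a cycle $c$ based at $v$ and $f(x)=\sum_{i=0}^n k_ix^i\in K[x]$, $f(c):=k_0v+\sum_{i=1}^n k_ic^i$. $\langle X\rangle$ denotes the two-sided ideal generated by $X$. *)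

(* Defs.v *)
(* Leavitt path algebra L_K(E) presented as the algebra of
   formal terms modulo the least congruence generated by the (nonunital,
   associative) K-algebra axioms and the Leavitt path algebra relations. *)
From HB Require Import structures.
From mathcomp Require Import all_boot all_order all_algebra.
From Stdlib Require List.
Set Implicit Arguments.
Unset Strict Implicit.
Unset Printing Implicit Defensive.
Import GRing.Theory.
Local Open Scope ring_scope.

Section Leavitt.
Variables (K : fieldType) (V Ed : Type) (s r : Ed -> V).

(* generators: vertices v, real edges e, ghost edges e^* *)
Inductive lgen : Type := GV of V | GE of Ed | GS of Ed.

Inductive lterm : Type :=
| LZero : lterm
| LGen : lgen -> lterm
| LAdd : lterm -> lterm -> lterm
| LMul : lterm -> lterm -> lterm
| LScale : K -> lterm -> lterm.

Definition lv (v : V) := LGen (GV v).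
Definition le (e : Ed) := LGen (GE e).
Definition ls (e : Ed) := LGen (GS e).

Definition src_enum (v : V) (l : list Ed) : Prop :=
  l <> nil /\ List.NoDup l /\ forall e, List.In e l <-> s e = v.

Definition lsum (l : list lterm) : lterm := foldr LAdd LZero l.

Inductive lequiv : lterm -> lterm -> Prop :=
| leq_refl x : lequiv x x
| leq_sym x y : lequiv x y -> lequiv y x
| leq_trans x y z : lequiv x y -> lequiv y z -> lequiv x z
| leq_add x x' y y' : lequiv x x' -> lequiv y y' -> lequiv (LAdd x y) (LAdd x' y')
| leq_mul x x' y y' : lequiv x x' -> lequiv y y' -> lequiv (LMul x y) (LMul x' y')
| leq_scale k x x' : lequiv x x' -> lequiv (LScale k x) (LScale k x')
| leq_addA x y z : lequiv (LAdd x (LAdd y z)) (LAdd (LAdd x y) z)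
| leq_addC x y : lequiv (LAdd x y) (LAdd y x)
| leq_add0 x : lequiv (LAdd x LZero) x
| leq_addN x : lequiv (LAdd x (LScale (-1) x)) LZero
| leq_scale1 x : lequiv (LScale 1 x) x
| leq_scaleA a b x : lequiv (LScale a (LScale b x)) (LScale (a * b) x)
| leq_scaleDl a b x : lequiv (LScale (a + b) x) (LAdd (LScale a x) (LScale b x))
| leq_scaleDr a x y : lequiv (LScale a (LAdd x y)) (LAdd (LScale a x) (LScale a y))
| leq_mulA x y z : lequiv (LMul x (LMul y z)) (LMul (LMul x y) z)
| leq_mulDl x y z : lequiv (LMul (LAdd x y) z) (LAdd (LMul x z) (LMul y z))
| leq_mulDr x y z : lequiv (LMul x (LAdd y z)) (LAdd (LMul x y) (LMul x z))
| leq_scaleMl a x y : lequiv (LScale a (LMul x y)) (LMul (LScale a x) y)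
| leq_scaleMr a x y : lequiv (LScale a (LMul x y)) (LMul x (LScale a y))
| leq_vv v : lequiv (LMul (lv v) (lv v)) (lv v)
| leq_vw v w : v <> w -> lequiv (LMul (lv v) (lv w)) LZero
| leq_se e : lequiv (LMul (lv (s e)) (le e)) (le e)
| leq_er e : lequiv (LMul (le e) (lv (r e))) (le e)
| leq_rs e : lequiv (LMul (lv (r e)) (ls e)) (ls e)
| leq_ss e : lequiv (LMul (ls e) (lv (s e))) (ls e)
| leq_CK1 e : lequiv (LMul (ls e) (le e)) (lv (r e))
| leq_CK1' e f : e <> f -> lequiv (LMul (ls e) (le f)) LZero
| leq_CK2 v l : src_enum v l ->
    lequiv (lv v) (lsum (map (fun e => LMul (le e) (ls e)) l)).

Fixpoint chain (l : list Ed) : Prop :=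
  match l with
  | e :: ((f :: _) as l') => r e = s f /\ chain l'
  | _ => True
  end.

Definition is_path (p : list Ed) : Prop := p <> nil /\ chain p.

Definition is_cycle (c : list Ed) : Prop :=
  match c with
  | nil => False
  | e :: es => chain c /\ r (last e es) = s e /\ List.NoDup (map s c)
  end.

Definition has_exit (p : list Ed) : Prop :=
  exists f, ~ List.In f p /\ exists e, List.In e p /\ s f = s e.

Definition lpath (p : list Ed) : lterm :=
  match p with
  | nil => LZero
  | e :: es => foldl (fun t f => LMul t (le f)) (le e) es
  end.

(* t^n for n >= 1 *)
Fixpoint lpow (t : lterm) (n : nat) : lterm :=
  match n with
  | 0 => LZero
  | S m => match m with 0 => t | _ => LMul (lpow t m) t end
  end.

(* f(c) := k_0 v + sum_{i=1}^n k_i c^i, with v = s(e_1) the base of c *)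
Definition poly_cycle (f : {poly K}) (c : list Ed) : lterm :=
  match c with
  | nil => LZero
  | e :: _ =>
      LAdd (LScale f`_0 (lv (s e)))
           (lsum (map (fun i => LScale f`_i (lpow (lpath c) i))
                      (iota 1 (size f).-1)))
  end.

Inductive in_ideal (X : lterm -> Prop) : lterm -> Prop :=
| ii_gen x : X x -> in_ideal X x
| ii_zero : in_ideal X LZero
| ii_add x y : in_ideal X x -> in_ideal X y -> in_ideal X (LAdd x y)
| ii_scale k x : in_ideal X x -> in_ideal X (LScale k x)
| ii_mull t x : in_ideal X x -> in_ideal X (LMul t x)
| ii_mulr x t : in_ideal X x -> in_ideal X (LMul x t)
| ii_equiv x y : lequiv x y -> in_ideal X x -> in_ideal X y.

Inductive in_prod (I J : lterm -> Prop) : lterm -> Prop :=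
| ip_zero : in_prod I J LZero
| ip_mul a b : I a -> J b -> in_prod I J (LMul a b)
| ip_add x y : in_prod I J x -> in_prod I J y -> in_prod I J (LAdd x y)
| ip_equiv x y : lequiv x y -> in_prod I J x -> in_prod I J y.

End Leavitt.

(* Main.v *)
Require Import Defs.
From mathcomp Require Import all_boot all_order all_algebra.
From Stdlib Require List.
From Stdlib Require Import Setoid Morphisms Classical.
Local Open Scope ring_scope.
Set Implicit Arguments.
Unset Strict Implicit.

#[export] Instance lequiv_Equiv (K : fieldType) (V Ed : Type) (s r : Ed -> V) :
  Equivalence (@lequiv K V Ed s r).
Proof. split; [intro x; exact: Defs.leq_refl | intros x y; exact: Defs.leq_sym | intros x y z; exact: Defs.leq_trans]. Qed.
#[export] Instance LMul_Proper (K : fieldType) (V Ed : Type) (s r : Ed -> V) :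
  Proper (lequiv s r ==> lequiv s r ==> lequiv s r) (@LMul K V Ed).
Proof. intros x x' Hx y y' Hy; exact: Defs.leq_mul. Qed.
#[export] Instance LAdd_Proper (K : fieldType) (V Ed : Type) (s r : Ed -> V) :
  Proper (lequiv s r ==> lequiv s r ==> lequiv s r) (@LAdd K V Ed).
Proof. intros x x' Hx y y' Hy; exact: Defs.leq_add. Qed.
#[export] Instance LScale_Proper (K : fieldType) (V Ed : Type) (s r : Ed -> V) k :
  Proper (lequiv s r ==> lequiv s r) (@LScale K V Ed k).
Proof. intros x x' Hx; exact: Defs.leq_scale. Qed.

Lemma idem0 (K : fieldType) (V Ed : Type) (s r : Ed -> V) (z : lterm K V Ed) :
  lequiv s r z (LAdd z z) -> lequiv s r z (LZero K V Ed).
Proof.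
move=> H.
rewrite -(leq_addN s r z).
rewrite {2}H -leq_addA leq_addN leq_add0. reflexivity.
Qed.

Lemma mul0r (K : fieldType) (V Ed : Type) (s r : Ed -> V) (x : lterm K V Ed) :
  lequiv s r (LMul x (LZero K V Ed)) (LZero K V Ed).
Proof. apply: idem0. rewrite -leq_mulDr leq_add0. reflexivity. Qed.

Lemma mul0l (K : fieldType) (V Ed : Type) (s r : Ed -> V) (x : lterm K V Ed) :
  lequiv s r (LMul (LZero K V Ed) x) (LZero K V Ed).
Proof. apply: idem0. rewrite -leq_mulDl leq_add0. reflexivity. Qed.

Lemma scale0 (K : fieldType) (V Ed : Type) (s r : Ed -> V) k :
  lequiv s r (LScale k (LZero K V Ed)) (LZero K V Ed).
Proof. apply: idem0. rewrite -leq_scaleDr leq_add0. reflexivity. Qed.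

#[export] Hint Extern 0 (lequiv _ _ _ _) => reflexivity : core.

Definition gmul {K : fieldType} {V Ed : Type} (l : list Ed) (x : lterm K V Ed) :=
  foldl (fun t e => LMul (ls K V e) t) x l.

Lemma gmul_proper (K : fieldType) (V Ed : Type) (s r : Ed -> V) l (x y : lterm K V Ed) :
  lequiv s r x y -> lequiv s r (gmul l x) (gmul l y).
Proof.
elim: l x y => [|e l IH] x y H /=; first exact: H.
apply: IH. by rewrite H.
Qed.

Lemma gmul0 (K : fieldType) (V Ed : Type) (s r : Ed -> V) l :
  lequiv s r (gmul l (LZero K V Ed)) (LZero K V Ed).
Proof.
elim: l => [|e l IH] /=; first reflexivity.
rewrite (gmul_proper _ (mul0r _ _ _)). exact: IH.
Qed.

Lemma gmulD (K : fieldType) (V Ed : Type) (s r : Ed -> V) l (x y : lterm K V Ed) :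
  lequiv s r (gmul l (LAdd x y)) (LAdd (gmul l x) (gmul l y)).
Proof.
elim: l x y => [|e l IH] x y /=; first reflexivity.
rewrite (gmul_proper _ (leq_mulDr _ _ _ _ _)). exact: IH.
Qed.

Lemma gmulZ (K : fieldType) (V Ed : Type) (s r : Ed -> V) l k (x : lterm K V Ed) :
  lequiv s r (gmul l (LScale k x)) (LScale k (gmul l x)).
Proof.
elim: l x => [|e l IH] x /=; first reflexivity.
rewrite (gmul_proper _ (Defs.leq_sym (leq_scaleMr _ _ _ _ _))). exact: IH.
Qed.

Definition Pc {K : fieldType} {V Ed : Type} (s r : Ed -> V) (C : V -> Prop) (x : lterm K V Ed) :=
  forall l u, C u -> lequiv s r (LMul (lv K Ed u) (gmul l x)) (LZero K V Ed).

Lemma Pc_equiv (K : fieldType) (V Ed : Type) (s r : Ed -> V) C (x y : lterm K V Ed) :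
  lequiv s r x y -> Pc s r C x -> Pc s r C y.
Proof. move=> E H l u Cu. rewrite -(gmul_proper _ E). exact: H. Qed.

Lemma Pc_zero (K : fieldType) (V Ed : Type) (s r : Ed -> V) C :
  Pc s r C (LZero K V Ed).
Proof. move=> l u Cu. by rewrite gmul0 mul0r. Qed.

Lemma Pc_add (K : fieldType) (V Ed : Type) (s r : Ed -> V) C (x y : lterm K V Ed) :
  Pc s r C x -> Pc s r C y -> Pc s r C (LAdd x y).
Proof. move=> Hx Hy l u Cu. by rewrite gmulD leq_mulDr Hx // Hy // leq_add0. Qed.

Lemma Pc_scale (K : fieldType) (V Ed : Type) (s r : Ed -> V) C k (x : lterm K V Ed) :
  Pc s r C x -> Pc s r C (LScale k x).
Proof. move=> Hx l u Cu. by rewrite gmulZ -leq_scaleMr Hx // scale0. Qed.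

Lemma Pc_vertex (K : fieldType) (V Ed : Type) (s r : Ed -> V) C p (x : lterm K V Ed) :
  Pc s r C x -> Pc s r C (LMul (lv K Ed p) x).
Proof.
move=> H [|e l] u Cu /=.
  case: (classic (u = p)) => [<-|up].
    rewrite leq_mulA leq_vv. exact: (H nil u Cu).
  by rewrite leq_mulA (leq_vw _ _ _ up) mul0l.
case: (classic (s e = p)) => [<-|ep].
  rewrite (gmul_proper _ (leq_mulA _ _ _ _ _)).
  rewrite (gmul_proper _ (Defs.leq_mul (leq_ss _ _ _ _) (Defs.leq_refl _ _ _))).
  exact: (H (e :: l) u Cu).
have E : lequiv s r (LMul (ls K V e) (LMul (lv K Ed p) x)) (LZero K V Ed).
  have E1 : lequiv s r (LMul (ls K V e) (lv K Ed p)) (LZero K V Ed).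
    rewrite -{1}(leq_ss K s r e) -leq_mulA (leq_vw _ _ _ ep). exact: mul0r.
  by rewrite leq_mulA E1 mul0l.
by rewrite (gmul_proper _ E) gmul0 mul0r.
Qed.

Lemma Pc_ghost (K : fieldType) (V Ed : Type) (s r : Ed -> V) C e (x : lterm K V Ed) :
  Pc s r C x -> Pc s r C (LMul (ls K V e) x).
Proof. move=> H l u Cu. exact: (H (e :: l) u Cu). Qed.

Lemma Pc_edge (K : fieldType) (V Ed : Type) (s r : Ed -> V) (C : V -> Prop) (c : list Ed) e
  (x : lterm K V Ed) :
  (forall f, C (s f) -> List.In f c) -> (forall f, List.In f c -> C (r f)) ->
  Pc s r C x -> Pc s r C (LMul (le K V e) x).
Proof.
move=> noex rng H [|f l] u Cu /=.
  case: (classic (s e = u)) => [eu|eu].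
    have Cr : C (r e) by apply: rng; apply: noex; rewrite eu.
    rewrite leq_mulA -eu (leq_se K s r e) -(leq_er K s r e) -leq_mulA (H nil (r e) Cr).
    exact: mul0r.
  rewrite leq_mulA -(leq_se K s r e) leq_mulA.
  have nu : u <> s e by move=> h; apply: eu.
  by rewrite (leq_vw _ _ _ nu) !mul0l.
case: (classic (f = e)) => [->|fe].
  rewrite (gmul_proper _ (leq_mulA _ _ _ _ _)).
  rewrite (gmul_proper _ (Defs.leq_mul (leq_CK1 _ _ _ _) (Defs.leq_refl _ _ _))).
  exact: (@Pc_vertex K V Ed s r C (r e) x H l u Cu).
rewrite (gmul_proper _ (leq_mulA _ _ _ _ _)).
rewrite (gmul_proper _ (Defs.leq_mul (leq_CK1' _ _ _ fe) (Defs.leq_refl _ _ _))).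
by rewrite (gmul_proper _ (mul0l _ _ _)) gmul0 mul0r.
Qed.

Lemma Pc_mull (K : fieldType) (V Ed : Type) (s r : Ed -> V) (C : V -> Prop) (c : list Ed)
  (x : lterm K V Ed) :
  (forall f, C (s f) -> List.In f c) -> (forall f, List.In f c -> C (r f)) ->
  Pc s r C x -> forall y, Pc s r C (LMul y x).
Proof.
move=> noex rng H y; elim: y x H => [|g|y1 IH1 y2 IH2|y1 IH1 y2 IH2|k y IH] x H.
- refine (Pc_equiv _ (Pc_zero K s r (C:=C))); symmetry; exact: mul0l.
- case: g => [p|e|e].
  + move=> l u Cu; exact: (Pc_vertex p H l Cu).
  + move=> l u Cu; exact: (Pc_edge e noex rng H l Cu).
  + move=> l u Cu; exact: (Pc_ghost e H l Cu).
- refine (Pc_equiv _ (Pc_add (IH1 _ H) (IH2 _ H))); symmetry; exact: leq_mulDl.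
- refine (Pc_equiv _ (IH1 _ (IH2 _ H))). exact: leq_mulA.
- refine (Pc_equiv _ (Pc_scale k (IH _ H))). exact: leq_scaleMl.
Qed.

Lemma base (K : fieldType) (V Ed : Type) (s r : Ed -> V) (C D : V -> Prop) (d : list Ed) :
  (forall f, D (s f) -> List.In f d) -> (forall f, List.In f d -> D (r f)) ->
  (forall u w, C u -> D w -> u <> w) ->
  forall l w (y : lterm K V Ed) u, D w -> C u ->
  lequiv s r (LMul (lv K Ed u) (gmul l (LMul (lv K Ed w) y))) (LZero K V Ed).
Proof.
move=> noex rng disj l; elim: l => [|e l IH] w y u Dw Cu /=.
  by rewrite leq_mulA (leq_vw _ _ _ (disj _ _ Cu Dw)) mul0l.
case: (classic (s e = w)) => [ew|ew].
  have Dr : D (r e) by apply: rng; apply: noex; rewrite ew.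
  have E : lequiv s r (LMul (ls K V e) (LMul (lv K Ed w) y))
                      (LMul (lv K Ed (r e)) (LMul (ls K V e) y)).
    rewrite leq_mulA -ew (leq_ss K s r e) leq_mulA (leq_rs K s r e).
    reflexivity.
  rewrite (gmul_proper _ E). exact: IH.
have E : lequiv s r (LMul (ls K V e) (LMul (lv K Ed w) y)) (LZero K V Ed).
  have E1 : lequiv s r (LMul (ls K V e) (lv K Ed w)) (LZero K V Ed).
    rewrite -{1}(leq_ss K s r e) -leq_mulA (leq_vw _ _ _ ew). exact: mul0r.
  by rewrite leq_mulA E1 mul0l.
by rewrite (gmul_proper _ E) gmul0 mul0r.
Qed.

Definition Cof {V Ed : Type} (s : Ed -> V) (c : list Ed) (u : V) :=
  exists e, List.In e c /\ s e = u.

Lemma noexit_of (V Ed : Type) (s : Ed -> V) c :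
  ~ has_exit s c -> forall f, Cof s c (s f) -> List.In f c.
Proof.
move=> H f [e [He Hs]].
case: (classic (List.In f c)) => // Hf.
exfalso; apply: H; exists f; split => //; exists e; split => //.
Qed.

Lemma chain_next (V Ed : Type) (s r : Ed -> V) es : forall e x,
  chain s r (e :: es) -> List.In x (e :: es) ->
  x = last e es \/ exists y, List.In y (e :: es) /\ s y = r x.
Proof.
elim: es => [|f es IH] e x Hc Hx.
  case: Hx => [<-|[]]; by left.
case: Hx => [<-|Hx].
  right; exists f; split; first by right; left.
  by case: Hc => ->.
case: Hc => _ Hc.
case: (IH f x Hc Hx) => [->|[y [Hy1 Hy2]]]; first by left.
right; exists y; split => //; by right.
Qed.

Lemma rng_of (V Ed : Type) (s r : Ed -> V) c :
  is_cycle s r c -> forall f, List.In f c -> Cof s c (r f).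
Proof.
case: c => [|e es] //= [Hc [Hl _]] f Hf.
case: (chain_next Hc Hf) => [->|[y [Hy1 Hy2]]].
  exists e; split; [by left | by rewrite Hl].
by exists y.
Qed.

Lemma fwd (V Ed : Type) (s r : Ed -> V) (Q : V -> Prop) es : forall e,
  chain s r (e :: es) ->
  (forall x, List.In x (e :: es) -> Q (s x) -> Q (r x)) ->
  forall x, List.In x (e :: es) -> Q (s x) -> Q (r (last e es)).
Proof.
elim: es => [|f es IH] e Hc Hcl x Hx Hq.
  case: Hx => [Hx|[]]; subst x; apply: Hcl => //; by left.
case: Hc => Hef Hc.
have Hcl' : forall x, List.In x (f :: es) -> Q (s x) -> Q (r x).
  move=> z Hz; apply: Hcl; by right.
case: Hx => [Hx|Hx].
  subst x; apply: (IH f Hc Hcl' f); first by left.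
  rewrite -Hef; apply: Hcl => //; by left.
exact: (IH f Hc Hcl' x Hx Hq).
Qed.

Lemma fromhead (V Ed : Type) (s r : Ed -> V) (Q : V -> Prop) es : forall e,
  chain s r (e :: es) ->
  (forall x, List.In x (e :: es) -> Q (s x) -> Q (r x)) ->
  Q (s e) -> forall x, List.In x (e :: es) -> Q (s x).
Proof.
elim: es => [|f es IH] e Hc Hcl Hq x Hx.
  by case: Hx => [<-|[]].
case: Hx => [<-|Hx] //.
case: Hc => Hef Hc.
apply: (IH f Hc) => //.
  move=> z Hz; apply: Hcl; by right.
rewrite -Hef; apply: Hcl => //; by left.
Qed.

Lemma all_in (V Ed : Type) (s r : Ed -> V) (Q : V -> Prop) c :
  is_cycle s r c ->
  (forall x, List.In x c -> Q (s x) -> Q (r x)) ->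
  (exists x, List.In x c /\ Q (s x)) -> forall x, List.In x c -> Q (s x).
Proof.
case: c => [|e es] //= [Hc [Hl _]] Hcl [x [Hx Hq]].
apply: (fromhead Hc Hcl).
rewrite -Hl. exact: (fwd Hc Hcl Hx Hq).
Qed.

Lemma disjoint_of (V Ed : Type) (s r : Ed -> V) c d :
  is_cycle s r c -> is_cycle s r d -> ~ has_exit s c -> ~ has_exit s d ->
  ~ (forall e, List.In e c <-> List.In e d) ->
  forall u w, Cof s c u -> Cof s d w -> u <> w.
Proof.
move=> cc cd nc nd ne u w Cu Dw uw; subst w.
have H1 : forall x, List.In x d -> List.In x c.
  move=> x Hx; apply: (noexit_of nc).
  apply: (all_in (Q := Cof s c) cd) => //.
    move=> z _ Hz; apply: (rng_of cc); exact: (noexit_of nc).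
  case: Dw => [y [Hy Hs]]; exists y; split => //; by rewrite Hs.
have H2 : forall x, List.In x c -> List.In x d.
  move=> x Hx; apply: (noexit_of nd).
  apply: (all_in (Q := Cof s d) cc) => //.
    move=> z _ Hz; apply: (rng_of cd); exact: (noexit_of nd).
  case: Cu => [y [Hy Hs]]; exists y; split => //; by rewrite Hs.
apply: ne => e; split; [exact: H2 | exact: H1].
Qed.

Definition Ru {K : fieldType} {V Ed : Type} (s r : Ed -> V) (v : V) (x : lterm K V Ed) :=
  lequiv s r (LMul x (lv K Ed v)) x.
Definition Lu {K : fieldType} {V Ed : Type} (s r : Ed -> V) (v : V) (x : lterm K V Ed) :=
  lequiv s r (LMul (lv K Ed v) x) x.

Lemma lsum_Ru (K : fieldType) (V Ed : Type) (s r : Ed -> V) v (F : nat -> lterm K V Ed) l :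
  (forall i, Ru s r v (F i)) -> Ru s r v (lsum (map F l)).
Proof.
move=> H; elim: l => [|i l IH] /=; first exact: mul0l.
rewrite /Ru leq_mulDl IH H. reflexivity.
Qed.

Lemma lsum_Lu (K : fieldType) (V Ed : Type) (s r : Ed -> V) v (F : nat -> lterm K V Ed) l :
  (forall i, Lu s r v (F i)) -> Lu s r v (lsum (map F l)).
Proof.
move=> H; elim: l => [|i l IH] /=; first exact: mul0r.
rewrite /Lu leq_mulDr IH H. reflexivity.
Qed.

Lemma lpow_Ru (K : fieldType) (V Ed : Type) (s r : Ed -> V) v (t : lterm K V Ed) i :
  Ru s r v t -> Ru s r v (lpow t i).
Proof.
move=> H; case: i => [|[|m]] /=; first exact: mul0l.
  exact: H.
rewrite /Ru -leq_mulA H. reflexivity.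
Qed.

Lemma lpow_Lu (K : fieldType) (V Ed : Type) (s r : Ed -> V) v (t : lterm K V Ed) i :
  Lu s r v t -> Lu s r v (lpow t i).
Proof.
move=> H; elim: i => [|[|m] IH] /=; first exact: mul0r.
  exact: H.
rewrite /Lu leq_mulA IH. reflexivity.
Qed.

Lemma foldl_Ru (K : fieldType) (V Ed : Type) (s r : Ed -> V) v es : forall (x : lterm K V Ed) y,
  r (last y es) = v -> (es = [::] -> Ru s r v x) ->
  Ru s r v (foldl (fun t f => LMul t (le K V f)) x es).
Proof.
elim: es => [|f es IH] x y Hl Hx /=; first exact: Hx.
apply: (IH _ f) => // Hes; subst es.
rewrite /Ru -leq_mulA -Hl /= (leq_er K s r f). reflexivity.
Qed.

Lemma foldl_Lu (K : fieldType) (V Ed : Type) (s r : Ed -> V) v es : forall (x : lterm K V Ed),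
  Lu s r v x -> Lu s r v (foldl (fun t f => LMul t (le K V f)) x es).
Proof.
elim: es => [|f es IH] x Hx /=; first exact: Hx.
apply: IH. rewrite /Lu leq_mulA Hx. reflexivity.
Qed.

Lemma pc_Ru (K : fieldType) (V Ed : Type) (s r : Ed -> V) (f : {poly K}) e es :
  is_cycle s r (e :: es) -> Ru s r (s e) (poly_cycle s f (e :: es)).
Proof.
move=> [_ [Hl _]] /=.
rewrite /Ru leq_mulDl -leq_scaleMl (leq_vv K s r (s e)).
rewrite (lsum_Ru (v := s e)); first reflexivity.
move=> i; rewrite /Ru -leq_scaleMl.
rewrite (lpow_Ru (v := s e)); first reflexivity.
apply: (foldl_Ru (y := e)) => // Hes; subst es.
rewrite /Ru -Hl /= (leq_er K s r e). reflexivity.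
Qed.

Lemma pc_Lu (K : fieldType) (V Ed : Type) (s r : Ed -> V) (f : {poly K}) e es :
  Lu s r (s e) (poly_cycle s f (e :: es)).
Proof.
rewrite /= /Lu leq_mulDr -leq_scaleMr (leq_vv K s r (s e)).
rewrite (lsum_Lu (v := s e)); first reflexivity.
move=> i; rewrite /Lu -leq_scaleMr.
rewrite (lpow_Lu (v := s e)); first reflexivity.
apply: foldl_Lu. rewrite /Lu (leq_se K s r e). reflexivity.
Qed.

Theorem lemma2p2 (K : fieldType) (V Ed : Type) (s r : Ed -> V)
  (hV : inhabited V) (c d : list Ed) (f g : {poly K}) :
  is_cycle s r c -> is_cycle s r d ->
  ~ (forall e, List.In e c <-> List.In e d) ->
  ~ has_exit s c -> ~ has_exit s d ->
  f`_0 != 0 -> g`_0 != 0 ->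
  forall t : lterm K V Ed,
    in_prod s r (in_ideal s r (fun x => x = poly_cycle s f c))
            (in_ideal s r (fun x => x = poly_cycle s g d)) t ->
    lequiv s r t (LZero K V Ed).
Proof.
move=> Hc Hd Hne nc nd _ _ t Ht.
have disj := disjoint_of Hc Hd nc nd Hne.
case: c Hc Hne nc Ht disj => [|e es] //= Hc0 Hne nc Ht disj.
case: d Hd Hne nd Ht disj => [|e' es'] //= Hd0 Hne nd Ht disj.
have Hc : is_cycle s r (e :: es) by [].
have Hd : is_cycle s r (e' :: es') by [].
set c := e :: es in Hc Hne nc Ht disj.
set d := e' :: es' in Hd Hne nd Ht disj.
have Cv : Cof s c (s e) by exists e; split => //; left.
have Dw : Cof s d (s e') by exists e'; split => //; left.
have PcW : Pc s r (Cof s c) (lv K Ed (s e')).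
  move=> l u Cu.
  rewrite -(gmul_proper _ (leq_vv K s r (s e'))).
  exact: (base (noexit_of nd) (rng_of Hd) disj l (lv K Ed (s e')) Dw Cu).
have A : forall y, lequiv s r (LMul (lv K Ed (s e)) (LMul y (lv K Ed (s e')))) (LZero K V Ed).
  move=> y; exact: (Pc_mull (noexit_of nc) (rng_of Hc) PcW y nil Cv).
have VW := leq_vw K s r (disj _ _ Cv Dw).
pose O (b : lterm K V Ed) := lequiv s r (LMul (lv K Ed (s e)) b) (LZero K V Ed) /\
  forall y, lequiv s r (LMul (lv K Ed (s e)) (LMul y b)) (LZero K V Ed).
have HO : forall b, in_ideal s r (fun x => x = poly_cycle s g d) b -> O b.
  move=> b; elim => {b}.
  - move=> x ->; split.
      by rewrite -(pc_Lu s r g e' es') leq_mulA VW mul0l.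
    move=> y; rewrite -(pc_Lu s r g e' es') (leq_mulA s r y) leq_mulA A mul0l.
    reflexivity.
  - split; first exact: mul0r.
    move=> y; by rewrite mul0r mul0r.
  - move=> x y _ [H1 H2] _ [H3 H4]; split.
      by rewrite leq_mulDr H1 H3 leq_add0.
    move=> z; by rewrite leq_mulDr leq_mulDr H2 H4 leq_add0.
  - move=> k x _ [H1 H2]; split.
      by rewrite -leq_scaleMr H1 scale0.
    move=> z; by rewrite -(leq_scaleMr s r k z x) -leq_scaleMr H2 scale0.
  - move=> t' x _ [H1 H2]; split; first exact: H2.
    move=> z; rewrite (leq_mulA s r z). exact: H2.
  - move=> x t' _ [H1 H2]; split.
      by rewrite leq_mulA H1 mul0l.
    move=> z; by rewrite (leq_mulA s r z x t') leq_mulA H2 mul0l.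
  - move=> x y E _ [H1 H2]; split.
      by rewrite -E.
    move=> z; by rewrite -E.
have HK : forall a, in_ideal s r (fun x => x = poly_cycle s f c) a ->
    forall b, in_ideal s r (fun x => x = poly_cycle s g d) b ->
    lequiv s r (LMul a b) (LZero K V Ed).
  move=> a; elim => {a}.
  - move=> x -> b Hb.
    rewrite -(pc_Ru f Hc) -leq_mulA (proj1 (HO b Hb)). exact: mul0r.
  - move=> b _; exact: mul0l.
  - move=> x y _ H1 _ H2 b Hb; by rewrite leq_mulDl H1 // H2 // leq_add0.
  - move=> k x _ H b Hb; by rewrite -leq_scaleMl H // scale0.
  - move=> t' x _ H b Hb; by rewrite -leq_mulA H // mul0r.
  - move=> x t' _ H b Hb; rewrite -leq_mulA H //; exact: ii_mull.
  - move=> x y E _ H b Hb; by rewrite -E H.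
elim: Ht => {t}.
- reflexivity.
- move=> a b Ha Hb; exact: HK.
- move=> x y _ H1 _ H2; by rewrite H1 H2 leq_add0.
- move=> x y E _ H; by rewrite -E.
Qed.
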